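(* Let $\tau > 0$ and $\lambda > 0$ be constants. Then the function $$c(x,y,d) \triangleq \log\left(1 + \left[\left(\frac{1}{1+x}\right)\left(\frac{1}{y}\right) + \tau\right]\frac{1}{d^{\lambda}}\right)$$ is convex on the set $\{(x,y,d) \in \mathbb{R}^3 : x > -1,\ y > 0,\ d > 0\}$.
   Context: $\log$ denotes the natural logarithm. *)

(* Defs.v *)
From Stdlib Require Import Reals.
Open Scope R_scope.

Definition pt3 : Type := (R * R * R)%type.

Definition dom3 (p : pt3) : Prop :=
  let '(x, y, d) := p in -1 < x /\ 0 < y /\ 0 < d.

Definition cfun (tau lambda : R) (p : pt3) : R :=
  let '(x, y, d) := p in
  ln (1 + ((1 / (1 + x)) * (1 / y) + tau) * (1 / Rpower d lambda)).

Definition comb3 (t : R) (p q : pt3) : pt3 :=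
  let '(x1, y1, d1) := p in
  let '(x2, y2, d2) := q in
  (t * x1 + (1 - t) * x2, t * y1 + (1 - t) * y2, t * d1 + (1 - t) * d2).

Definition convex_on3 (S : pt3 -> Prop) (f : pt3 -> R) : Prop :=
  forall p q t, S p -> S q -> 0 <= t <= 1 ->
    f (comb3 t p q) <= t * f p + (1 - t) * f q.

(* Main.v *)
Require Import Defs.
From Stdlib Require Import Reals Lra.
Open Scope R_scope.

Definition G (t u v : R) : R := exp (t * ln u + (1 - t) * ln v).

Lemma G_pos t u v : 0 < G t u v.
Proof. apply exp_pos. Qed.

Lemma amgm t u v : 0 < u -> 0 < v -> 0 <= t <= 1 -> G t u v <= t * u + (1 - t) * v.
Proof.
  intros hu hv ht. unfold G.
  set (a := ln u). set (b := ln v). set (m := t * a + (1 - t) * b).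
  assert (Ha : exp m * (1 + (a - m)) <= u).
  { rewrite <- (exp_ln u hu). fold a.
    replace (exp a) with (exp m * exp (a - m)) by (rewrite <- exp_plus; f_equal; ring).
    apply Rmult_le_compat_l; [left; apply exp_pos | apply exp_ineq1_le]. }
  assert (Hb : exp m * (1 + (b - m)) <= v).
  { rewrite <- (exp_ln v hv). fold b.
    replace (exp b) with (exp m * exp (b - m)) by (rewrite <- exp_plus; f_equal; ring).
    apply Rmult_le_compat_l; [left; apply exp_pos | apply exp_ineq1_le]. }
  assert (E : exp m = t * (exp m * (1 + (a - m))) + (1 - t) * (exp m * (1 + (b - m))))
    by (unfold m; ring).
  rewrite E.
  apply Rplus_le_compat; apply Rmult_le_compat_l; lra.
Qed.

Lemma G_mul t u1 u2 v1 v2 : 0 < u1 -> 0 < u2 -> 0 < v1 -> 0 < v2 ->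
  G t (u1 * u2) (v1 * v2) = G t u1 v1 * G t u2 v2.
Proof.
  intros. unfold G. rewrite <- exp_plus, !ln_mult by assumption. f_equal; ring.
Qed.

Lemma G_inv t u v : 0 < u -> 0 < v -> G t (/ u) (/ v) = / G t u v.
Proof.
  intros. unfold G. rewrite <- exp_Ropp, !ln_Rinv by assumption. f_equal; ring.
Qed.

Lemma G_const t c : 0 < c -> G t c c = c.
Proof.
  intros. unfold G. replace (t * ln c + (1 - t) * ln c) with (ln c) by ring.
  apply exp_ln; assumption.
Qed.

Lemma holder t u1 u2 v1 v2 : 0 < u1 -> 0 < u2 -> 0 < v1 -> 0 < v2 -> 0 <= t <= 1 ->
  G t u1 u2 + G t v1 v2 <= G t (u1 + v1) (u2 + v2).
Proof.
  intros h1 h2 h3 h4 ht.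
  set (S := u1 + v1). set (T := u2 + v2).
  assert (hS : 0 < S) by (unfold S; lra). assert (hT : 0 < T) by (unfold T; lra).
  assert (e1 : G t u1 u2 = G t (u1 / S) (u2 / T) * G t S T).
  { rewrite <- G_mul; try apply Rdiv_lt_0_compat; auto.
    unfold Rdiv; rewrite !Rmult_assoc, !Rinv_l, !Rmult_1_r by lra; reflexivity. }
  assert (e2 : G t v1 v2 = G t (v1 / S) (v2 / T) * G t S T).
  { rewrite <- G_mul; try apply Rdiv_lt_0_compat; auto.
    unfold Rdiv; rewrite !Rmult_assoc, !Rinv_l, !Rmult_1_r by lra; reflexivity. }
  rewrite e1, e2, <- Rmult_plus_distr_r.
  pattern (G t S T) at 2; rewrite <- (Rmult_1_l (G t S T)).
  apply Rmult_le_compat_r; [left; apply G_pos|].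
  eapply Rle_trans.
  { apply Rplus_le_compat; apply amgm; try apply Rdiv_lt_0_compat; auto. }
  assert (E : t * (u1 / S) + (1 - t) * (u2 / T) + (t * (v1 / S) + (1 - t) * (v2 / T))
              = t * ((u1 + v1) / S) + (1 - t) * ((u2 + v2) / T)) by (unfold Rdiv; ring).
  rewrite E. fold S T. unfold Rdiv; rewrite !Rinv_r by lra. lra.
Qed.

Theorem proposition1 (tau lambda : R) (htau : 0 < tau) (hlambda : 0 < lambda) :
  convex_on3 dom3 (cfun tau lambda).
Proof.
  intros [[x1 y1] d1] [[x2 y2] d2] t [hx1 [hy1 hd1]] [hx2 [hy2 hd2]] ht.
  simpl.
  set (a1 := 1 + x1). set (a2 := 1 + x2).
  assert (ha1 : 0 < a1) by (unfold a1; lra). assert (ha2 : 0 < a2) by (unfold a2; lra).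
  replace (1 + (t * x1 + (1 - t) * x2)) with (t * a1 + (1 - t) * a2) by (unfold a1, a2; ring).
  set (yc := t * y1 + (1 - t) * y2). set (dc := t * d1 + (1 - t) * d2).
  set (ac := t * a1 + (1 - t) * a2).
  set (R1 := Rpower d1 lambda). set (R2 := Rpower d2 lambda).
  assert (hR1 : 0 < R1) by (unfold R1, Rpower; apply exp_pos).
  assert (hR2 : 0 < R2) by (unfold R2, Rpower; apply exp_pos).
  set (A1 := 1 / a1 * (1 / y1)). set (A2 := 1 / a2 * (1 / y2)).
  assert (hA1 : 0 < A1) by (unfold A1; apply Rmult_lt_0_compat; apply Rdiv_lt_0_compat; lra).
  assert (hA2 : 0 < A2) by (unfold A2; apply Rmult_lt_0_compat; apply Rdiv_lt_0_compat; lra).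
  set (g1 := (A1 + tau) * (1 / R1)). set (g2 := (A2 + tau) * (1 / R2)).
  assert (hg1 : 0 < g1) by (unfold g1; apply Rmult_lt_0_compat; [lra | apply Rdiv_lt_0_compat; lra]).
  assert (hg2 : 0 < g2) by (unfold g2; apply Rmult_lt_0_compat; [lra | apply Rdiv_lt_0_compat; lra]).
  assert (hac : G t a1 a2 <= ac) by (apply amgm; auto).
  assert (hyc : G t y1 y2 <= yc) by (apply amgm; auto).
  assert (hdc : G t d1 d2 <= dc) by (apply amgm; auto).
  assert (hac0 : 0 < ac) by (pose proof (G_pos t a1 a2); lra).
  assert (hyc0 : 0 < yc) by (pose proof (G_pos t y1 y2); lra).
  assert (hdc0 : 0 < dc) by (pose proof (G_pos t d1 d2); lra).
  set (Rc := Rpower dc lambda).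
  assert (hRc : 0 < Rc) by (unfold Rc, Rpower; apply exp_pos).
  set (Ac := 1 / ac * (1 / yc)).
  assert (hAc0 : 0 < Ac) by (unfold Ac; apply Rmult_lt_0_compat; apply Rdiv_lt_0_compat; lra).
  assert (hAc : Ac <= G t A1 A2).
  { unfold A1, A2. rewrite G_mul by (apply Rdiv_lt_0_compat; lra).
    unfold Rdiv. rewrite !Rmult_1_l. rewrite !G_inv by lra.
    unfold Ac, Rdiv; rewrite !Rmult_1_l.
    apply Rmult_le_compat; try (left; apply Rinv_0_lt_compat; try lra; apply G_pos);
      apply Rinv_le_contravar; auto using G_pos. }
  assert (hD : 1 / Rc <= G t (1 / R1) (1 / R2)).
  { unfold Rdiv; rewrite !Rmult_1_l. rewrite G_inv by lra.
    apply Rinv_le_contravar; [apply G_pos|].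
    assert (E : G t R1 R2 = Rpower (G t d1 d2) lambda).
    { unfold G, R1, R2, Rpower. rewrite ln_exp. rewrite !ln_exp. f_equal; ring. }
    rewrite E. unfold Rc. apply Rle_Rpower_l; [lra|]. split; [apply G_pos | exact hdc]. }
  assert (hgc : (Ac + tau) * (1 / Rc) <= G t g1 g2).
  { unfold g1, g2. rewrite G_mul by (try lra; apply Rdiv_lt_0_compat; lra).
    apply Rmult_le_compat.
    - lra.
    - left; apply Rdiv_lt_0_compat; lra.
    - eapply Rle_trans; [| apply holder; auto].
      rewrite G_const by lra. lra.
    - exact hD. }
  assert (hfin : 1 + (Ac + tau) * (1 / Rc) <= G t (1 + g1) (1 + g2)).
  { eapply Rle_trans; [| apply holder; auto; lra].
    rewrite G_const by lra. lra. }
  assert (hpos : 0 < 1 + (Ac + tau) * (1 / Rc)).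
  { assert (0 < (Ac + tau) * (1 / Rc)) by (apply Rmult_lt_0_compat; [lra | apply Rdiv_lt_0_compat; lra]). lra. }
  fold a1 a2. fold A1 A2 R1 R2 g1 g2. fold Ac Rc.
  replace (t * ln (1 + g1) + (1 - t) * ln (1 + g2)) with (ln (G t (1 + g1) (1 + g2)))
    by (unfold G; apply ln_exp).
  destruct hfin as [hlt|heq]; [left; apply ln_increasing; assumption | rewrite heq; right; reflexivity].
Qed.
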